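(* For every prime power $q$ and all $k,m\in\mathbb{N}$, there exists an $m$-multiplication-friendly collection $(C^{(h)};\mathrm{Enc}^{(h)})_{h\in[m]}$ of $[n,k]_q$ classical codes, where $n=q^{m(k-1)}$.
   Context: $x*y$ is the componentwise product in $\mathbb{F}_q^n$. An encoding function of an $[n,k]_q$ classical (linear) code $C\subseteq\mathbb{F}_q^n$ is an $\mathbb{F}_q$-linear isomorphism $\mathrm{Enc}:\mathbb{F}_{q^k}\to C$ (viewing $\mathbb{F}_{q^k}$ as a $k$-dimensional $\mathbb{F}_q$-space). A collection $(C^{(h)};\mathrm{Enc}^{(h)})_{h\in[m]}$ of $[n,k]_q$ codes is $m$-multiplication-friendly if there is an $\mathbb{F}_q$-linear $\mathrm{Dec}:\mathbb{F}_q^n\to\mathbb{F}_{q^k}$ with $z_1\cdots z_m=\mathrm{Dec}(\mathrm{Enc}^{(1)}(z_1)*\cdots*\mathrm{Enc}^{(m)}(z_m))$ for all $z_1,\dots,z_m\in\mathbb{F}_{q^k}$. *)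

(* Defs.v *)
From HB Require Import structures.
From mathcomp Require Import all_boot all_order all_algebra all_field.
Set Implicit Arguments. Unset Strict Implicit. Unset Printing Implicit Defensive.
Import GRing.Theory.
Local Open Scope ring_scope.

(* F plays the role of F_q (q = #|F|), L the role of F_{q^k}
   (a field extension of F of dimension k).  Vectors of F_q^n are row
   vectors 'rV[F]_n. *)

(* Componentwise product x_1 * ... * x_m in F^n (empty product = all-ones). *)
Definition cwprod (F : fieldType) (n m : nat) (x : 'I_m -> 'rV[F]_n) : 'rV[F]_n :=
  \row_(j < n) \prod_(h < m) x h 0 j.

Definition code_collection (F : fieldType) (L : fieldExtType F) (n k m : nat)
    (C : 'I_m -> {vspace 'rV[F]_n}) (Enc : 'I_m -> 'Hom(L, 'rV[F]_n)) : Prop :=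
  forall h : 'I_m,
    [/\ \dim (C h) = k, lker (Enc h) = 0%VS & limg (Enc h) = C h].

Definition mult_friendly (F : fieldType) (L : fieldExtType F) (n m : nat)
    (Enc : 'I_m -> 'Hom(L, 'rV[F]_n)) : Prop :=
  exists Dec : 'Hom('rV[F]_n, L),
    forall z : 'I_m -> L,
      \prod_(h < m) z h = Dec (cwprod (fun h => Enc h (z h))).

(* Main.v *)
Require Import Defs.
From HB Require Import structures.
From mathcomp Require Import all_boot all_order all_algebra all_field.
Set Implicit Arguments. Unset Strict Implicit. Unset Printing Implicit Defensive.
Import GRing.Theory.
Local Open Scope ring_scope.

Notation TT L m := {ffun 'I_m -> 'I_(\dim (fullv : {vspace L}))}.

Definition gidx (F : finFieldType) (L : fieldExtType F) m n (j : 'I_n) : option (TT L m) :=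
  omap enum_val (insub (val j) : option 'I_#|TT L m|).

Definition encf (F : finFieldType) (L : fieldExtType F) m n (h : 'I_m) (z : L) : 'rV[F]_n :=
  \row_(j < n) match gidx L m j with Some t => coord (vbasis fullv) (t h) z | None => 0 end.

Lemma encf_lin (F : finFieldType) (L : fieldExtType F) m n (h : 'I_m) :
  linear (@encf F L m n h).
Proof.
move=> a x y; apply/rowP=> j; rewrite !mxE.
by case: gidx => [t|]; rewrite ?linearP ?mulr0 ?addr0.
Qed.

HB.instance Definition _ (F : finFieldType) (L : fieldExtType F) m n (h : 'I_m) :=
  GRing.isLinear.Build F L 'rV[F]_n _ (@encf F L m n h) (@encf_lin F L m n h).

Definition PP (F : finFieldType) (L : fieldExtType F) m (t : TT L m) : L :=
  \prod_(h < m) (vbasis (fullv : {vspace L}))`_(t h).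

Definition decf (F : finFieldType) (L : fieldExtType F) m n (v : 'rV[F]_n) : L :=
  \sum_(j < n) match gidx L m j with Some t => v 0 j *: PP t | None => 0 end.

Lemma decf_lin (F : finFieldType) (L : fieldExtType F) m n :
  linear (@decf F L m n).
Proof.
move=> a x y; rewrite /decf scaler_sumr -big_split /=; apply eq_bigr=> j _; rewrite /=.
by case: (gidx L m j) => [t|]; rewrite ?mxE ?scalerDl ?scalerA ?scaler0 ?addr0.
Qed.

HB.instance Definition _ (F : finFieldType) (L : fieldExtType F) m n :=
  GRing.isLinear.Build F 'rV[F]_n L _ (@decf F L m n) (@decf_lin F L m n).

Section Main.
Variables (F : finFieldType) (L : fieldExtType F) (m n : nat).
Variable Hle : (#|TT L m| <= n)%N.

Definition pos (t : TT L m) : 'I_n := widen_ord Hle (enum_rank t).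

Lemma gidx_pos t : gidx L m (pos t) = Some t.
Proof.
rewrite /gidx /pos /=.
have -> : (insub (val (enum_rank t)) : option 'I_#|TT L m|) = Some (enum_rank t) by rewrite valK.
by rewrite /= enum_rankK.
Qed.

Lemma gidx_Some j t : gidx L m j = Some t -> j = pos t.
Proof.
rewrite /gidx; case: insubP => [i _ ij|] //= [<-].
by apply/val_inj; rewrite /= enum_valK ij.
Qed.

Lemma pos_inj : injective pos.
Proof. by move=> t1 t2 e; have := gidx_pos t1; rewrite e gidx_pos => -[]. Qed.

Lemma sum_gidx (V : nmodType) (G : option (TT L m) -> V) : G None = 0 ->
  \sum_(j < n) G (gidx L m j) = \sum_(t : TT L m) G (Some t).
Proof.
move=> G0; rewrite (bigID (fun j => j \in pos @: setT)) /=.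
rewrite [X in _ + X]big1 ?addr0; last first.
  move=> j; case E: gidx => [t|] // /negP[]; rewrite (gidx_Some E).
  by apply: imset_f; rewrite inE.
rewrite big_imset /=; last by move=> x y _ _; apply: pos_inj.
rewrite (eq_bigr (fun t => G (Some t))) => [|t _]; last by rewrite gidx_pos.
by apply: eq_bigl => t; rewrite inE.
Qed.

Lemma mainid (z : 'I_m -> L) :
  \prod_(h < m) z h = @decf F L m n (cwprod (fun h => @encf F L m n h (z h))).
Proof.
set G := fun o : option (TT L m) => match o with Some t => (\prod_(h < m) coord (vbasis fullv) (t h) (z h)) *: PP t | None => 0 end.
rewrite /decf (_ : \sum_(j < n) _ = \sum_(j < n) G (gidx L m j)); last first.
  apply: eq_bigr => j _; rewrite /cwprod mxE; case E: (gidx L m j) => [t|] //.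
  by congr (_ *: _); apply: eq_bigr => h _; rewrite mxE E.
rewrite sum_gidx //.
rewrite (eq_bigr (fun h => \sum_(i < \dim (fullv : {vspace L})) coord (vbasis fullv) i (z h) *: (vbasis fullv)`_i)); last first.
  by move=> h _; rewrite -coord_vbasis ?memvf.
rewrite bigA_distr_bigA /=; apply: eq_bigr => t _.
by rewrite scaler_prod.
Qed.
Lemma encf_inj h z : @encf F L m n h z = 0 -> z = 0.
Proof.
move=> E; rewrite (coord_vbasis (memvf z)) big1 // => i _.
have := congr1 (fun v : 'rV[F]_n => v 0 (pos [ffun=> i])) E.
by rewrite !mxE gidx_pos ffunE => ->; rewrite scale0r.
Qed.
End Main.

Unset Implicit Arguments.
Theorem lemma4p5 (F : finFieldType) (L : fieldExtType F) (k m : nat) :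
  (0 < k)%N -> \dim {:L} = k ->
  let n := (#|F| ^ (m * (k - 1)))%N in
  exists (C : 'I_m -> {vspace 'rV[F]_n}) (Enc : 'I_m -> 'Hom(L, 'rV[F]_n)),
    @code_collection F L n k m C Enc /\ @mult_friendly F L n m Enc.
Proof.
move=> k0 dimL n.
have Hle : (#|TT L m| <= n)%N.
  rewrite card_ffun !card_ord /n dimL mulnC expnM; clear n.
  case: m => [|m'] //; rewrite leq_exp2r //.
  by have := ltn_expl (k - 1) (finNzRing_gt1 F); rewrite subn1 prednK.
have ker0 : forall h, lker (linfun (@encf F L m n h)) = 0%VS.
  move=> h; apply/eqP; rewrite -subv0; apply/subvP=> z.
  by rewrite memv_ker lfunE /= => /eqP/(encf_inj Hle) ->; rewrite mem0v.
exists (fun h => limg (linfun (@encf F L m n h))), (fun h => linfun (@encf F L m n h)).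
split.
  move=> h; split => //.
  by rewrite limg_dim_eq ?dimL // ker0 capv0.
exists (linfun (@decf F L m n)) => z; rewrite lfunE /= (mainid Hle).
congr (decf _ _); rewrite /cwprod; apply/rowP => j; rewrite !mxE.
by apply: eq_bigr => h _; rewrite lfunE.
Qed.
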